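(* Let $\Gamma_1=(\gamma_1,\gamma_1^\perp)$ and $\Gamma_2=(\gamma_2,\gamma_2^\perp)$ be two circles that lie on a common sphere $k\in\mathbb{P}(\mathcal{L})$ (with $\langle\mathfrak k,\mathfrak p\rangle\ne0$) and are not tangent to each other. Let $\mathfrak{s}_i\in\gamma_i^\perp\cap\mathcal L$, $i=1,2$, be spheres (not point spheres) that intersect $k$ orthogonally, and set $$\mathfrak{a}:=\langle\mathfrak{s}_2,\mathfrak{p}\rangle\mathfrak{s}_1-\langle\mathfrak{s}_1,\mathfrak{p}\rangle\mathfrak{s}_2,\qquad \tilde{\mathfrak{a}}:=\langle\sigma_{\mathfrak p}(\mathfrak{s}_2),\mathfrak{p}\rangle\mathfrak{s}_1-\langle\mathfrak{s}_1,\mathfrak{p}\rangle\sigma_{\mathfrak p}(\mathfrak{s}_2).$$ Then $\sigma_a$ and $\sigma_{\tilde a}$ are M-Lie inversions preserving $k$, each maps the points of $\Gamma_1$ bijectively onto the points of $\Gamma_2$, and they induce the two Ribaucour correspondences between $\Gamma_1$ and $\Gamma_2$: for every point $p_1$ of $\Gamma_1$ and $\sigma\in\{\sigma_a,\sigma_{\tilde a}\}$ there is a circle tangent to $\Gamma_1$ at $p_1$ and tangent to $\Gamma_2$ at $\sigma(p_1)$.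
   Context: Let $\mathbb{R}^{4,2}$ be $\mathbb{R}^6$ with a nondegenerate symmetric bilinear form $\langle\cdot,\cdot\rangle$ of signature $(4,2)$, $\mathcal{L}$ its light cone, $\mathbb{P}(\mathcal{L})$ the set of (oriented) spheres; black-letter vectors denote homogeneous coordinates. Two spheres are in oriented contact iff their coordinates are orthogonal. A point sphere complex $\mathfrak{p}$ with $\langle\mathfrak{p},\mathfrak{p}\rangle=-1$ is fixed; point spheres are elements of $\mathbb{P}(\mathcal{L}\cap\{\mathfrak p\}^\perp)$. A sphere $t$ intersects a sphere $s$ with $\langle\mathfrak s,\mathfrak p\rangle\neq0$ orthogonally iff $\langle\mathfrak{t},\mathfrak{s}+\langle\mathfrak{s},\mathfrak{p}\rangle\mathfrak{p}\rangle=0$. For $\langle\mathfrak a,\mathfrak a\rangle\neq0$ the Lie inversion with respect to $a$ is $\sigma_a(\mathfrak r)=\mathfrak r-\frac{2\langle\mathfrak r,\mathfrak a\rangle}{\langle\mathfrak a,\mathfrak a\rangle}\mathfrak a$; it is an M-Lie inversion if $\langle\mathfrak a,\mathfrak p\rangle=0$ (then it preserves $\mathfrak p$ and is a Möbius transformation). $\sigma_{\mathfrak p}$ reverses orientation of all spheres. A circle is a pair $\Gamma=(\gamma,\gamma^\perp)$ where $\gamma\subset\{\mathfrak{p}\}^\perp$ is a 3-dimensional subspace of signature $(2,1)$; its points are the point spheres in $\gamma$, the spheres containing it are those in $\gamma^\perp\cap\mathcal L$. A circle lies on a sphere $k$ iff $\mathfrak k\in\gamma^\perp$. A Ribaucour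 correspondence between two cospherical circles is a bijection between their points such that corresponding points are points of tangency of a circle tangent to both (the two circles envelop a common circle congruence). *)

(* Defs.v *)
From HB Require Import structures.
From mathcomp Require Import all_boot all_order all_algebra.
From mathcomp Require Import reals.
Set Implicit Arguments.
Unset Strict Implicit.
Unset Printing Implicit Defensive.
Import GRing.Theory Num.Theory.
Local Open Scope ring_scope.

(* Lie sphere geometry in R^{4,2}.  Vectors of R^6 are row vectors 'rV[R]_6;
   the bilinear form is <x,y> := x M y^T for a symmetric matrix M of
   signature (4,2). *)
Section LieGeometry.
Variable R : realType.
Variable M : 'M[R]_6.

Definition lform (x y : 'rV[R]_6) : R := (x *m M *m y^T) 0 0.

Definition sig_diag (n k : nat) : 'M[R]_n :=
  diag_mx (\row_(i < n) (if (i < k)%N then 1 else -1 : R)).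

Definition lie_form_42 : Prop :=
  M^T = M /\ exists P : 'M[R]_6, P \in unitmx /\ P^T *m M *m P = sig_diag 6 4.

(* homogeneous coordinates of an element of P(L) *)
Definition light (x : 'rV[R]_6) : Prop := x != 0 /\ lform x x = 0.

Definition lie_inv (a r : 'rV[R]_6) : 'rV[R]_6 :=
  r - (2 * lform r a / lform a a) *: a.

Variable p : 'rV[R]_6.  (* the point sphere complex *)

Definition point_sphere (x : 'rV[R]_6) : Prop := light x /\ lform x p = 0.

Definition M_Lie_inversion (a : 'rV[R]_6) : Prop :=
  lform a a != 0 /\ lform a p = 0.

Definition orth_intersect (t s : 'rV[R]_6) : Prop :=
  lform t (s + lform s p *: p) = 0.

(* A circle: the row space gamma of G is a 3-dimensional subspace of
   {p}^perp on which the form has signature (2,1). *)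
Definition is_circle (G : 'M[R]_(3,6)) : Prop :=
  row_free G /\ G *m M *m p^T = 0 /\
  exists Q : 'M[R]_3, Q \in unitmx /\ Q *m (G *m M *m G^T) *m Q^T = sig_diag 3 2.

Definition circle_point (G : 'M[R]_(3,6)) (x : 'rV[R]_6) : Prop :=
  point_sphere x /\ (x <= G)%MS.

(* y lies in gamma^perp (i.e. the sphere y contains the circle) *)
Definition circle_perp (G : 'M[R]_(3,6)) (y : 'rV[R]_6) : Prop :=
  G *m M *m y^T = 0.

Definition perp_space (x : 'rV[R]_6) : 'M[R]_6 := kermx (M *m x^T).

(* circles G1, G2 are tangent at their common point x: they have the same
   contact element gamma /\ x^perp at x (same point and tangent line) *)
Definition touch_at (G1 G2 : 'M[R]_(3,6)) (x : 'rV[R]_6) : Prop :=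
  circle_point G1 x /\ circle_point G2 x /\
  (G1 :&: perp_space x == G2 :&: perp_space x)%MS.

Definition circles_tangent (G1 G2 : 'M[R]_(3,6)) : Prop :=
  exists x, touch_at G1 G2 x.

Definition ribaucour_inversion (G1 G2 : 'M[R]_(3,6)) (k b : 'rV[R]_6) : Prop :=
  M_Lie_inversion b /\
      (exists l : R, lie_inv b k = l *: k) /\
      (forall x, circle_point G1 x -> circle_point G2 (lie_inv b x)) /\
      (forall x x', circle_point G1 x -> circle_point G1 x' ->
          lie_inv b x = lie_inv b x' -> x = x') /\
      (forall y, circle_point G2 y -> exists x, circle_point G1 x /\ lie_inv b x = y) /\
      (forall x, circle_point G1 x -> ~ circle_point G2 x ->
          exists C : 'M[R]_(3,6),
            is_circle C /\ touch_at C G1 x /\ touch_at C G2 (lie_inv b x)).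

End LieGeometry.

(* Main.v *)
Require Import Defs.
From HB Require Import structures.
From mathcomp Require Import all_boot all_order all_algebra.
From mathcomp Require Import reals.
From mathcomp Require Import ring lra zify.
Import GRing.Theory Num.Theory.
Local Open Scope ring_scope.
Set Implicit Arguments. Unset Strict Implicit.

Section Aux.
Variable R : realType.
Variable M : 'M[R]_6.
Hypothesis HMs : M^T = M.
Hypothesis HMu : M \in unitmx.

Notation lf := (lform M).

Lemma lfDl x y z : lf (x + y) z = lf x z + lf y z.
Proof. by rewrite /lform !mulmxDl mxE. Qed.
Lemma lfZl c x z : lf (c *: x) z = c * lf x z.
Proof. by rewrite /lform -!scalemxAl mxE. Qed.
Lemma lfDr x y z : lf z (x + y) = lf z x + lf z y.
Proof. by rewrite /lform linearD /= mulmxDr mxE. Qed.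
Lemma lfZr c x z : lf z (c *: x) = c * lf z x.
Proof. by rewrite /lform linearZ /= -scalemxAr mxE. Qed.
Lemma lfNl x z : lf (- x) z = - lf x z.
Proof. by rewrite -scaleN1r lfZl mulN1r. Qed.
Lemma lfNr x z : lf z (- x) = - lf z x.
Proof. by rewrite -scaleN1r lfZr mulN1r. Qed.
Lemma lfBl x y z : lf (x - y) z = lf x z - lf y z.
Proof. by rewrite lfDl lfNl. Qed.
Lemma lfBr x y z : lf z (x - y) = lf z x - lf z y.
Proof. by rewrite lfDr lfNr. Qed.
Lemma lf0l z : lf 0 z = 0.
Proof. by rewrite /lform !mul0mx mxE. Qed.
Lemma lf0r z : lf z 0 = 0.
Proof. by rewrite /lform trmx0 mulmx0 mxE. Qed.
Lemma lfC x y : lf x y = lf y x.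
Proof.
rewrite /lform.
have -> : x *m M *m y^T = (y *m M *m x^T)^T by rewrite !trmx_mul trmxK HMs mulmxA.
by rewrite mxE.
Qed.

Definition lfE := (lfDl, lfDr, lfZl, lfZr, lfBl, lfBr, lfNl, lfNr, lf0l, lf0r).

Lemma lf_entry m n (A : 'M[R]_(m,6)) (B : 'M[R]_(n,6)) i j :
  (A *m M *m B^T) i j = lf (row i A) (row j B).
Proof.
rewrite /lform -row_mul !mxE; apply: eq_bigr => l _; rewrite !mxE.
done.
Qed.

Lemma row_rV (y : 'rV[R]_6) i : row i y = y.
Proof. by apply/rowP => j; rewrite mxE (ord1 i). Qed.

Lemma sub_lf (G : 'M[R]_(3,6)) w y : (w <= G)%MS -> circle_perp M G y -> lf w y = 0.
Proof.
move=> /submxP[D ->] H; rewrite /lform -!mulmxA (mulmxA G M).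
by move: H; rewrite /circle_perp => ->; rewrite mulmx0 mxE.
Qed.


Definition i1 : 'I_3 := @Ordinal 3 1 isT.
Definition i2 : 'I_3 := @Ordinal 3 2 isT.
Definition j1 : 'I_2 := @Ordinal 2 1 isT.

Definition mk3 (u v w : 'rV[R]_6) : 'M[R]_(3,6) :=
  \matrix_(i < 3, j < 6) (if val i == 0%N then u 0 j else if val i == 1%N then v 0 j else w 0 j).
Definition mk2 (u v : 'rV[R]_6) : 'M[R]_(2,6) :=
  \matrix_(i < 2, j < 6) (if val i == 0%N then u 0 j else v 0 j).
Definition r3 (a b c : R) : 'rV[R]_3 :=
  \row_(i < 3) (if val i == 0%N then a else if val i == 1%N then b else c).
Definition r2 (a b : R) : 'rV[R]_2 :=
  \row_(i < 2) (if val i == 0%N then a else b).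

Lemma mul_r3 a b c u v w : r3 a b c *m mk3 u v w = a *: u + b *: v + c *: w.
Proof. by apply/rowP => j; rewrite !mxE !big_ord_recl big_ord0 !mxE /= addr0 addrA. Qed.
Lemma mul_r2 a b u v : r2 a b *m mk2 u v = a *: u + b *: v.
Proof. by apply/rowP => j; rewrite !mxE !big_ord_recl big_ord0 !mxE /= addr0. Qed.

Lemma r3_eta (r : 'rV[R]_3) : r = r3 (r 0 ord0) (r 0 i1) (r 0 i2).
Proof.
apply/rowP => j; rewrite mxE; case: j => [[|[|[|//]]] Hj] /=; congr (r 0 _); exact: val_inj.
Qed.
Lemma r2_eta (r : 'rV[R]_2) : r = r2 (r 0 ord0) (r 0 j1).
Proof.
apply/rowP => j; rewrite mxE; case: j => [[|[|//]] Hj] /=; congr (r 0 _); exact: val_inj.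
Qed.

Lemma row_mk3 u v w i : row i (mk3 u v w) =
  if val i == 0%N then u else if val i == 1%N then v else w.
Proof.
apply/rowP => j; rewrite !mxE.
by case: (val i == 0%N); case: (val i == 1%N).
Qed.
Lemma row_mk2 u v i : row i (mk2 u v) = if val i == 0%N then u else v.
Proof. apply/rowP => j; rewrite !mxE. by case: (val i == 0%N). Qed.

Lemma mk3_freeP u v w :
  (forall a b c, a *: u + b *: v + c *: w = 0 -> [/\ a = 0, b = 0 & c = 0]) ->
  row_free (mk3 u v w).
Proof.
move=> H; apply: inj_row_free => r; rewrite [r]r3_eta mul_r3 => /H [-> -> ->].
by apply/rowP => j; rewrite !mxE; case: ifP => //; case: ifP.
Qed.
Lemma mk2_freeP u v :
  (forall a b, a *: u + b *: v = 0 -> a = 0 /\ b = 0) ->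
  row_free (mk2 u v).
Proof.
move=> H; apply: inj_row_free => r; rewrite [r]r2_eta mul_r2 => /H [-> ->].
by apply/rowP => j; rewrite !mxE; case: ifP.
Qed.

Lemma sub_mk3 u v w a b c x : x = a *: u + b *: v + c *: w -> (x <= mk3 u v w)%MS.
Proof. by rewrite -mul_r3 => ->; exact: submxMl. Qed.

Lemma mk2_sub m (A : 'M[R]_(m,6)) y h : (y <= A)%MS -> (h <= A)%MS -> (mk2 y h <= A)%MS.
Proof. by move=> Hy Hh; apply/row_subP => i; rewrite row_mk2; case: ifP. Qed.

Lemma mk2_free y h : y != 0 -> lf h y = 0 -> lf h h != 0 -> row_free (mk2 y h).
Proof.
move=> Hy Hhy Hhh; apply: mk2_freeP => a b E.
have := congr1 (fun v => lf v h) E; rewrite /= !lfE lfC Hhy mulr0 add0r => /eqP.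
rewrite mulf_eq0 (negbTE Hhh) orbF => /eqP Hb; split => //.
move: E; rewrite Hb scale0r addr0 => /eqP; rewrite scaler_eq0 (negbTE Hy) orbF.
by move/eqP.
Qed.

Lemma li_lf a x y : lf (lie_inv M a x) y = lf x y - 2 * lf x a / lf a a * lf a y.
Proof. by rewrite /lie_inv lfBl lfZl. Qed.

Lemma li_iso a x y : lf a a != 0 -> lf (lie_inv M a x) (lie_inv M a y) = lf x y.
Proof.
move=> Ha; rewrite /lie_inv !lfE ?[lf a x]lfC ?[lf a y]lfC ?[lf y x]lfC.
field; exact: Ha.
Qed.

Lemma li_adj a x y : lf a a != 0 -> lf (lie_inv M a x) y = lf x (lie_inv M a y).
Proof.
move=> Ha; rewrite /lie_inv !lfE ?[lf a x]lfC ?[lf a y]lfC ?[lf y x]lfC.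
field; exact: Ha.
Qed.

Lemma li_invol a x : lf a a != 0 -> lie_inv M a (lie_inv M a x) = x.
Proof.
move=> Ha; have E : lf (lie_inv M a x) a = - lf x a.
  rewrite li_lf; field; exact: Ha.
rewrite {1}/lie_inv E /lie_inv; apply/rowP => j; rewrite !mxE.
field; exact: Ha.
Qed.

Lemma li0 a : lie_inv M a 0 = 0.
Proof. by rewrite /lie_inv lf0l mulr0 mul0r scale0r subr0. Qed.

Lemma char3 (G : 'M[R]_(3,6)) u v w : row_free G ->
  circle_perp M G u -> circle_perp M G v -> circle_perp M G w ->
  row_free (mk3 u v w) ->
  forall y, (y <= G)%MS <-> [/\ lf y u = 0, lf y v = 0 & lf y w = 0].
Proof.
move=> HG Hu Hv Hw HN y; split.
  by move=> Hy; split; apply: sub_lf Hy _.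
case=> h1 h2 h3.
set N := mk3 u v w; set K := kermx (M *m N^T).
have HyK : (y <= K)%MS.
  apply/sub_kermxP; rewrite mulmxA; apply/matrixP => i j.
  rewrite lf_entry row_rV row_mk3 [RHS]mxE.
  by case: j => [[|[|[|//]]] Hj] /=.
have HGK : (G <= K)%MS.
  apply/sub_kermxP; rewrite mulmxA; apply/matrixP => i j.
  rewrite lf_entry row_mk3 [RHS]mxE.
  by case: j => [[|[|[|//]]] Hj] /=; apply: sub_lf (row_sub i G) _.
have rK : \rank K = 3%N.
  rewrite mxrank_ker -mxrank_tr trmx_mul trmxK HMs mxrankMfree; last by rewrite row_free_unit.
  by rewrite (eqP HN).
have KG : (K <= G)%MS by rewrite -(mxrank_leqif_sup HGK).2 rK (eqP HG).
exact: submx_trans HyK KG.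
Qed.

Lemma cap2 (G : 'M[R]_(3,6)) y h z : row_free G -> y != 0 ->
  (z <= G)%MS -> lf z y != 0 -> (y <= G)%MS -> (h <= G)%MS ->
  lf h y = 0 -> lf y y = 0 -> lf h h != 0 ->
  (G :&: perp_space M y == mk2 y h)%MS.
Proof.
move=> HG Hy Hz Hzy HyG HhG Hhy Hyy Hhh.
set P := perp_space M y.
have inP x : (x <= P)%MS <-> lf x y = 0.
  rewrite /P /perp_space; split.
    move/sub_kermxP; rewrite mulmxA => /matrixP /(_ 0 0).
    by rewrite lf_entry !row_rV mxE.
  move=> E; apply/sub_kermxP; rewrite mulmxA; apply/matrixP => i j.
  by rewrite lf_entry !row_rV mxE.
have rP : \rank P = 5%N.
  rewrite /P /perp_space mxrank_ker -mxrank_tr trmx_mul trmxK HMs mxrankMfree; last by rewrite row_free_unit.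
  by rewrite rank_rV Hy.
have sub : (mk2 y h <= G :&: P)%MS.
  rewrite sub_capmx; apply/andP; split; apply: mk2_sub => //; apply/inP => //.
have le6 : (\rank (G + P) <= 6)%N := rank_leq_col _.
have ge5 : (5 <= \rank (G + P))%N by have := mxrankS (addsmxSr G P); rewrite rP.
have ne5 : \rank (G + P) != 5%N.
  apply/negP => /eqP E.
  have : (G + P <= P)%MS by rewrite -(mxrank_leqif_sup (addsmxSr G P)).2 E rP.
  move=> HGP; have : (z <= P)%MS.
    by apply: submx_trans HGP; apply: submx_trans Hz _; apply: addsmxSl.
  by move/inP => E'; rewrite E' eqxx in Hzy.
have rGP : \rank (G + P) = 6%N by lia.
have rcap : \rank (G :&: P) = 2%N.
  have := mxrank_sum_cap G P; rewrite rGP rP (eqP HG); lia.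
have r2 : \rank (mk2 y h) = 2%N by apply/eqP; apply: mk2_free.
by rewrite sub andbT -(mxrank_leqif_sup sub).2 r2 rcap.
Qed.

Lemma lift01 : lift ord0 (ord0 : 'I_2) = i1. Proof. exact: val_inj. Qed.
Lemma lift012 : lift ord0 (lift ord0 (ord0 : 'I_1)) = i2. Proof. exact: val_inj. Qed.

Lemma gramB (B : 'M[R]_(3,6)) : B *m M *m B^T = sig_diag R 3 2 ->
  forall r r' : 'rV[R]_3, lf (r *m B) (r' *m B) =
     r 0 ord0 * r' 0 ord0 + r 0 i1 * r' 0 i1 - r 0 i2 * r' 0 i2.
Proof.
move=> HB r r'; rewrite /lform.
have -> : r *m B *m M *m (r' *m B)^T = r *m (B *m M *m B^T) *m r'^T by rewrite trmx_mul !mulmxA.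
rewrite HB /sig_diag !mxE !big_ord_recl !big_ord0 !mxE /= !lift01 !lift012.
rewrite !big_ord_recl !big_ord0 !mxE /= !lift01 !lift012 /=.
ring.
Qed.

Lemma r3E a b c : [/\ r3 a b c 0 ord0 = a, r3 a b c 0 i1 = b & r3 a b c 0 i2 = c].
Proof. by rewrite !mxE. Qed.

Variable p : 'rV[R]_6.

Lemma circ_basis G : is_circle M p G ->
  exists B : 'M[R]_(3,6), [/\ B *m M *m B^T = sig_diag R 3 2, (G <= B)%MS & (B <= G)%MS].
Proof.
case=> HG [Hp [Q [HQ HS]]]; exists (Q *m G); split.
- by move: HS; rewrite trmx_mul !mulmxA.
- have HQf : row_full Q by rewrite row_full_unit.
  by rewrite (eqmxMfull G HQf).
- exact: submxMl.
Qed.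

Lemma circ_vecs G x : is_circle M p G -> circle_point M p G x ->
  exists g z, [/\ (g <= G)%MS, lf g x = 0, lf g g = 1, (z <= G)%MS & lf z x != 0].
Proof.
move=> HC [[[Hx0 Hxx] Hxp] HxG].
have [B [HB GB BG]] := circ_basis HC.
have /submxP [w Ew] : (x <= B)%MS by apply: submx_trans HxG GB.
rewrite Ew gramB // in Hxx.
have [w0 [w1 [w2 [E0 E1 E2]]]] : exists w0 w1 w2 : R, [/\ w 0 ord0 = w0, w 0 i1 = w1 & w 0 i2 = w2].
  by do 3!eexists.
rewrite E0 E1 E2 in Hxx.
have w2n : w2 != 0.
  apply/negP => /eqP w20; move: Hxx; rewrite w20 => Hxx.
  have h0 : w0 = 0 by nra.
  have h1 : w1 = 0 by nra.
  move: Hx0; rewrite Ew [w]r3_eta E0 E1 E2 h0 h1 w20.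
  suff -> : r3 0 0 0 = 0 by rewrite mul0mx eqxx.
  by apply/rowP => j; rewrite !mxE; case: ifP => //; case: ifP.
exists (r3 (- w1 / w2) (w0 / w2) 0 *m B), (r3 0 0 1 *m B); split.
- exact: submx_trans (submxMl _ _) BG.
- rewrite Ew gramB // !mxE /= E0 E1 E2; field; exact: w2n.
- rewrite gramB // !mxE /=.
  transitivity ((w0 * w0 + w1 * w1) / (w2 * w2)); first by field.
  have -> : w0 * w0 + w1 * w1 = w2 * w2 by lra.
  by rewrite divff // mulf_neq0.
- exact: submx_trans (submxMl _ _) BG.
- rewrite Ew gramB // !mxE /= E2.
  by rewrite !mul0r add0r mul1r sub0r oppr_eq0.
Qed.

Lemma circ_point G : is_circle M p G -> exists x, circle_point M p G x.
Proof.
move=> HC; have [B [HB GB BG]] := circ_basis HC.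
have xG : (r3 0 1 1 *m B <= G)%MS by exact: submx_trans (submxMl _ _) BG.
exists (r3 0 1 1 *m B); split => //; split; last first.
  by case: HC => _ [Hp _]; apply: sub_lf xG Hp.
split; last by rewrite gramB // !mxE /=; ring.
apply/negP => /eqP E.
have := gramB HB (r3 0 1 1) (r3 0 1 0); rewrite E lf0l !mxE /=.
move/eqP; rewrite !mul0r !mulr0 !mulr1 add0r subr0 eq_sym; exact/negP/oner_neq0.
Qed.

Lemma comb_sub m (A : 'M[R]_(m,6)) (u v : 'rV[R]_6) c : (u <= A)%MS -> (v <= A)%MS -> (u - c *: v <= A)%MS.
Proof. by move=> hu hv; apply: addmx_sub => //; rewrite -scaleNr; exact: scalemx_sub. Qed.

Lemma inperp x y : (y <= perp_space M x)%MS <-> lf y x = 0.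
Proof.
rewrite /perp_space; split.
  move/sub_kermxP; rewrite mulmxA => /matrixP /(_ 0 0).
  by rewrite lf_entry !row_rV mxE.
move=> E; apply/sub_kermxP; rewrite mulmxA; apply/matrixP => i j.
by rewrite lf_entry !row_rV mxE.
Qed.

Hypothesis hp : lf p p = -1.

Lemma indep3 k s : lf k k = 0 -> lf s s = 0 -> lf k p != 0 -> lf s p != 0 ->
  lf s k = - (lf k p * lf s p) -> row_free (mk3 p k s).
Proof.
move=> hkk hss hc he hsk; apply: mk3_freeP => al be ga E.
have ep := congr1 (fun v => lf v p) E.
have ek := congr1 (fun v => lf v k) E.
have es := congr1 (fun v => lf v s) E.
move: ep ek es; rewrite /= !lfE hp hkk hss hsk [lf p k]lfC [lf p s]lfC [lf k s]lfC hsk.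
move=> ep ek es.
have h1 : (al - ga * lf s p) * lf k p = 0 by rewrite -ek; ring.
have h2 : (al - be * lf k p) * lf s p = 0 by rewrite -es; ring.
move/eqP: h1; rewrite mulf_eq0 (negbTE hc) orbF subr_eq0 => /eqP h1.
move/eqP: h2; rewrite mulf_eq0 (negbTE he) orbF subr_eq0 => /eqP h2.
have hal : al = 0.
  by move: ep; rewrite -h2 -h1 => ep; lra.
split => //.
  by move: h2; rewrite hal => /esym /eqP; rewrite mulf_eq0 (negbTE hc) orbF => /eqP.
by move: h1; rewrite hal => /esym /eqP; rewrite mulf_eq0 (negbTE he) orbF => /eqP.
Qed.

Lemma sig_unit n k0 : sig_diag R n k0 \in unitmx.
Proof.
rewrite unitmxE det_diag unitfE; apply/prodf_neq0 => i _; rewrite mxE.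
by case: ifP => _; rewrite ?oppr_eq0 oner_neq0.
Qed.

Lemma half G1 G2 k s1 s2 :
  is_circle M p G1 -> is_circle M p G2 ->
  light M k -> lf k p != 0 ->
  circle_perp M G1 k -> circle_perp M G2 k ->
  ~ circles_tangent M p G1 G2 ->
  light M s1 -> circle_perp M G1 s1 -> lf s1 p != 0 ->
  orth_intersect M p s1 k ->
  light M s2 -> circle_perp M G2 s2 -> lf s2 p != 0 ->
  orth_intersect M p s2 k ->
  ribaucour_inversion M p G1 G2 k (lf s2 p *: s1 - lf s1 p *: s2).
Proof.
move=> HC1 HC2 [k0 hkk] hc Hk1 Hk2 Hnt [s10 hs1] H11 he1 ho1 [s20 hs2] H22 he2 ho2.
set a := lf s2 p *: s1 - lf s1 p *: s2.
have hs1k : lf s1 k = - (lf k p * lf s1 p).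
  by move: ho1; rewrite /orth_intersect !lfE => ho1; rewrite -[LHS]subr0 -ho1; ring.
have hs2k : lf s2 k = - (lf k p * lf s2 p).
  by move: ho2; rewrite /orth_intersect !lfE => ho2; rewrite -[LHS]subr0 -ho2; ring.
have [HG1 [Hp1 _]] := HC1.
have [HG2 [Hp2 _]] := HC2.
have ch1 := char3 HG1 Hp1 Hk1 H11 (indep3 hkk hs1 hc he1 hs1k).
have ch2 := char3 HG2 Hp2 Hk2 H22 (indep3 hkk hs2 hc he2 hs2k).
have lfa y : lf y a = lf s2 p * lf y s1 - lf s1 p * lf y s2 by rewrite /a !lfE.
have hap : lf a p = 0 by rewrite lfC lfa [lf p s1]lfC [lf p s2]lfC; ring.
have hak : lf a k = 0 by rewrite lfC lfa [lf k s1]lfC [lf k s2]lfC hs1k hs2k; ring.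
have [d hd] : exists d, lf s1 s2 = d by eexists.
have hd' : lf s2 s1 = d by rewrite lfC.
have has1 : lf a s1 = - (lf s1 p * d) by rewrite lfC lfa hs1 hd; ring.
have has2 : lf a s2 = lf s2 p * d by rewrite lfC lfa hs2 hd'; ring.
have haa : lf a a = -2 * lf s1 p * lf s2 p * d.
  by rewrite lfa has1 has2; ring.
have dn : d != 0.
  apply/negP => /eqP d0; apply: Hnt.
  have swap y : lf y a = 0 -> (y <= G1)%MS <-> (y <= G2)%MS.
    move=> hya; rewrite ch1 ch2; move: hya; rewrite lfa => hya.
    split; case=> h1 h2 h3; split => //.
      by apply/eqP; move/eqP: hya; rewrite h3 mulr0 sub0r oppr_eq0 mulf_eq0 (negbTE he1).
    by apply/eqP; move/eqP: hya; rewrite h3 mulr0 subr0 mulf_eq0 (negbTE he2).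
  have [x [Hx1 Hxa]] : exists x, circle_point M p G1 x /\ (forall y, lf y x = 0 -> lf y a = 0).
    case: (eqVneq a 0) => [a0|an0].
      have [x Hx] := circ_point HC1; exists x; split => // y _.
      by rewrite a0 lf0r.
    exists a; split => //; split; first split; first split => //.
    - by rewrite haa d0 mulr0.
    - by [].
    - by apply/ch1; split => //; rewrite has1 d0 mulr0 oppr0.
  exists x; have [[[x0 hxx] hxp] hxG1] := Hx1.
  have hxG2 : (x <= G2)%MS by apply/(swap x (Hxa x hxx)).
  split => //; split => //.
  apply/andP; split; apply/row_subP => i; set y := row i _;
    (have : (y <= _ :&: _)%MS := row_sub i _); rewrite !sub_capmx => /andP [hy1 hyP];
    rewrite hyP andbT; by apply/(swap y (Hxa y (proj1 (inperp x y) hyP))).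
have han : lf a a != 0.
  by rewrite haa !mulf_neq0 // oppr_eq0 pnatr_eq0.
clearbody a.
have map12 y : (y <= G1)%MS -> (lie_inv M a y <= G2)%MS.
  move=> /ch1 [h1 h2 h3]; apply/ch2; rewrite !li_lf hap hak has2 h1 h2 !mulr0 !subr0; split => //.
  by rewrite lfa h3 haa; field; rewrite dn he1 he2.
have map21 y : (y <= G2)%MS -> (lie_inv M a y <= G1)%MS.
  move=> /ch2 [h1 h2 h3]; apply/ch1; rewrite !li_lf hap hak has1 h1 h2 !mulr0 !subr0; split => //.
  by rewrite lfa h3 haa; field; rewrite dn he1 he2.
have cpm G G' : (forall y, (y <= G)%MS -> (lie_inv M a y <= G')%MS) ->
    forall x, circle_point M p G x -> circle_point M p G' (lie_inv M a x).
  move=> mp x [[[x0 hxx] hxp] hxG]; split; [split; [split|] | exact: mp].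
  - apply/negP => /eqP E; move: x0; by rewrite -(li_invol x han) E li0 eqxx.
  - by rewrite li_iso.
  - by rewrite li_lf hap mulr0 subr0.
have cp12 := cpm _ _ map12.
have cp21 := cpm _ _ map21.
split; [by split | split; [|split; [exact: cp12|split; [|split]]]].
- exists 1; rewrite scale1r /lie_inv [lf k a]lfC hak mulr0 mul0r scale0r subr0 //.
- by move=> x x' _ _ E; rewrite -(li_invol x han) E li_invol.
- by move=> y Hy; exists (lie_inv M a y); split; [exact: cp21 | exact: li_invol].
move=> x Hx1 Hx2.
have [[[x0 hxx] hxp] hxG] := Hx1.
have [al hal] : exists al, lf x a = al by eexists.
have hax : lf a x = al by rewrite lfC.
have aln : al != 0.
  apply/negP => /eqP al0; apply: Hx2.
  have <- : lie_inv M a x = x by rewrite /lie_inv hal al0 mulr0 mul0r scale0r subr0.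
  exact: cp12.
have [g [z [gG hgx hgg zG hzx]]] := circ_vecs HC1 Hx1.
have hxg : lf x g = 0 by rewrite lfC.
have [be hbe] : exists be, lf g a = be by eexists.
have hag : lf a g = be by rewrite lfC.
have [de hde] : exists de, lf a a = de by eexists.
have den : de != 0 by rewrite -hde.
have hgp : lf g p = 0 by apply: sub_lf gG Hp1.
pose C := mk3 (g - (be / al) *: x)
              (al^-1 *: x + 2^-1 *: (a - (de / (2 * al)) *: x))
              (al^-1 *: x - 2^-1 *: (a - (de / (2 * al)) *: x)).
have hxC : (x <= C)%MS.
  apply: (sub_mk3 (a := 0) (b := al / 2) (c := al / 2)).
  by apply/rowP => j; rewrite !mxE; field; rewrite aln.
have hgC : (g <= C)%MS.
  apply: (sub_mk3 (a := 1) (b := be / 2) (c := be / 2)).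
  by apply/rowP => j; rewrite !mxE; field; rewrite aln.
have haC : (a <= C)%MS.
  apply: (sub_mk3 (a := 0) (b := 1 + de / 4) (c := de / 4 - 1)).
  by apply/rowP => j; rewrite !mxE; field; rewrite aln.
have hCg : C *m M *m C^T = sig_diag R 3 2.
  apply/matrixP => i j; rewrite lf_entry !row_mk3 /sig_diag !mxE.
  case: i => [[|[|[|//]]] Hi]; case: j => [[|[|[|//]]] Hj] /=;
    by rewrite !lfE ?hxx ?hgx ?hxg ?hgg ?hal ?hax ?hbe ?hag ?hde; field; rewrite ?aln.
have rfC : row_free C.
  have rr3 : \rank (C *m M *m C^T) = 3%N by rewrite hCg mxrank_unit // sig_unit.
  have := mxrankM_maxl (C *m M) C^T; have := mxrankM_maxl C M.
  rewrite rr3 /row_free => h1 h2; rewrite eqn_leq rank_leq_row /=.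
  exact: leq_trans h2 h1.
have HCp : C *m M *m p^T = 0.
  apply/matrixP => i j; rewrite lf_entry row_rV row_mk3 [RHS]mxE.
  by case: i => [[|[|[|//]]] Hi] /=; rewrite !lfE ?hxp ?hgp ?hap; ring.
have HC : is_circle M p C.
  split => //; split => //; exists 1%:M; split; first exact: unitmx1.
  by rewrite mul1mx trmx1 mulmx1.
have hggn : lf g g != 0 by rewrite hgg oner_neq0.
have haxn : lf a x != 0 by rewrite hax.
have Hsx := cp12 x Hx1.
exists C; split => //; split.
- split; first exact: (conj (proj1 Hx1) hxC).
  split; first exact: Hx1.
  have e1 := cap2 rfC x0 haC haxn hxC hgC hgx hxx hggn.
  have e2 := cap2 HG1 x0 zG hzx hxG gG hgx hxx hggn.
  apply/eqmxP; exact: eqmx_trans (eqmxP e1) (eqmx_sym (eqmxP e2)).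
have [[[sx0 hsxx] hsxp] hsxG2] := Hsx.
have hsxC : (lie_inv M a x <= C)%MS by rewrite /lie_inv; exact: comb_sub hxC haC.
have hsgC : (lie_inv M a g <= C)%MS by rewrite /lie_inv; exact: comb_sub hgC haC.
have hsgx : lf (lie_inv M a g) (lie_inv M a x) = 0 by rewrite li_iso.
have hsgg : lf (lie_inv M a g) (lie_inv M a g) != 0 by rewrite li_iso.
have hasx : lf a (lie_inv M a x) != 0.
  rewrite lfC li_lf hal hde; apply/negP => /eqP E.
  have E' : al - 2 * al / de * de = - al by field.
  by move: aln; rewrite -oppr_eq0 -E' E eqxx.
have hszx : lf (lie_inv M a z) (lie_inv M a x) != 0 by rewrite li_iso.
split; first exact: (conj (proj1 Hsx) hsxC).
split; first exact: Hsx.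
have e1 := cap2 rfC sx0 haC hasx hsxC hsgC hsgx hsxx hsgg.
have e2 := cap2 HG2 sx0 (map12 _ zG) hszx hsxG2 (map12 _ gG) hsgx hsxx hsgg.
apply/eqmxP; exact: eqmx_trans (eqmxP e1) (eqmx_sym (eqmxP e2)).
Qed.

End Aux.

Theorem mainTheorem6 (R : realType) (M : 'M[R]_6) (p k s1 s2 : 'rV[R]_6)
    (G1 G2 : 'M[R]_(3,6)) :
  lie_form_42 M -> lform M p p = -1 ->
  is_circle M p G1 -> is_circle M p G2 ->
  light M k -> lform M k p != 0 ->
  circle_perp M G1 k -> circle_perp M G2 k ->
  ~ circles_tangent M p G1 G2 ->
  light M s1 -> circle_perp M G1 s1 -> lform M s1 p != 0 ->
  orth_intersect M p s1 k ->
  light M s2 -> circle_perp M G2 s2 -> lform M s2 p != 0 ->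
  orth_intersect M p s2 k ->
  let a := lform M s2 p *: s1 - lform M s1 p *: s2 in
  let s2' := lie_inv M p s2 in
  let a' := lform M s2' p *: s1 - lform M s1 p *: s2' in
  ribaucour_inversion M p G1 G2 k a /\ ribaucour_inversion M p G1 G2 k a'.
Proof.
move=> [HMs [P [HP HPM]]] hp HC1 HC2 Hk hc Hk1 Hk2 Hnt Hs1 H11 he1 ho1 Hs2 H22 he2 ho2 a s2' a'.
have HMu : M \in unitmx.
  have : P^T *m M *m P \in unitmx by rewrite HPM sig_unit.
  by rewrite !unitmx_mul => /andP [/andP [_ ->]].
split; first exact: (half HMs HMu hp HC1 HC2 Hk hc Hk1 Hk2 Hnt Hs1 H11 he1 ho1 Hs2 H22 he2 ho2).
have hpn : lform M p p != 0 by rewrite hp oppr_eq0 oner_neq0.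
have [s20 hs2] := Hs2.
have Ls2' : light M s2'.
  split; last by rewrite /s2' (li_iso HMs).
  apply/negP => /eqP E; move: s20.
  by rewrite -(li_invol s2 hpn) -/s2' E li0 eqxx.
have H22' : circle_perp M G2 s2'.
  have [_ [Hp2 _]] := HC2.
  move: H22; rewrite /circle_perp /s2' /lie_inv linearB linearZ /= mulmxBr -scalemxAr => ->.
  by rewrite Hp2 scaler0 subr0.
have he2' : lform M s2' p != 0.
  rewrite /s2' li_lf hp.
  have -> : lform M s2 p - 2 * lform M s2 p / -1 * -1 = - lform M s2 p by field.
  by rewrite oppr_eq0.
have ho2' : orth_intersect M p s2' k.
  move: ho2; rewrite /orth_intersect /s2' !li_lf !lfE hp => ho2.
  by rewrite (lfC HMs p k) ho2; field.
exact: (half HMs HMu hp HC1 HC2 Hk hc Hk1 Hk2 Hnt Hs1 H11 he1 ho1 Ls2' H22' he2' ho2').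
Qed.
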